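(* Consider the multi-hop control network closed loop of the context with plant, graphs, scheduling, integers $n,r,m,s$, step amplitude $A$ and bounds $\bar O_y,\bar O_u\ge 0$ fixed. Restricted to parameter choices $(\mathbf c,\mathbf d,\mathbf w_R,\mathbf w_O)$ satisfying the deadbeat identity $D_CD_{P'}+N_{C'}N_{G_R}N_PN_{G_O}=z^{l}$ with $l=m+r+1$, each of the constraints $O_y\le\bar O_y$ and $O_u\le\bar O_u$ is equivalent to a finite system of polynomial inequalities in the entries of $\mathbf d$ and $\mathbf w_R$ (with coefficients depending only on the fixed data).
   Context: Plant: $P(z)=\dfrac{N_P(z)}{M(z)D_{P'}(z)}$ with $N_P(z)=b_{n-1}z^{n-1}+\dots+b_0$, $D_{P'}(z)=z^r+a_{r-1}z^{r-1}+\dots+a_0$, $M(z)$ a monic polynomial, $r+\deg M=n$. Controllability network: acyclic directed graph $(V_R,E_R)$ with controller node $v_c$ and actuator node $v_u$, weights $W_R:E_R\to\mathbb R$, and a fixed scheduling assigning to each directed path $\rho$ from $v_c$ to $v_u$ a delay $d(\rho)\in\mathbb N$; $\chi_R(d)$ is the set of paths of delay $d$, $D_R$ the finite set of occurring delays, $\bar D_R=\max D_R$, $W_R(\rho)$ the product of the weights on $\rho$, $\gamma_R(d)=\sum_{\rho\in\chi_R(d)}W_R(\rho)$, $N_{G_R}(z)=\sum_{d\in D_R}\gamma_R(d)z^{\bar D_R-d}$, $G_R(z)=N_{G_R}(z)/z^{\bar D_R}$. Observability network analogously (weights $W_O$, delays $D_O$, $\bar D_O=\max D_O$, $\gamma_O$,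 $N_{G_O}(z)=\sum_{d\in D_O}\gamma_O(d)z^{\bar D_O-d}$, $G_O(z)=N_{G_O}(z)/z^{\bar D_O}$). Controller $C(z)=M(z)z^{\bar D_R}z^{\bar D_O}\,N_{C'}(z)/D_C(z)$ with $N_{C'}(z)=d_sz^s+\dots+d_0$, $D_C(z)=(z-1)(z^m+c_{m-1}z^{m-1}+\dots+c_0)$, $m+1=s+\deg M+\bar D_R+\bar D_O$; $\mathbf c=(c_{m-1},\dots,c_0)$, $\mathbf d=(d_s,\dots,d_0)$, $\mathbf w_R=(W_R(e))_{e\in E_R}$, $\mathbf w_O=(W_O(e))_{e\in E_O}$. With step reference $r(k)=A$, $k\ge0$ ($R(z)=Az/(z-1)$), the plant output and plant input have Z-transforms $Y(z)=\frac{CG_RP}{1+CG_RPG_O}R(z)$ and $U(z)=\frac{CG_R}{1+CG_RPG_O}R(z)$; the error is $e(k)=y(k)-r(k)$. Overshoots: $O_y=\sup_{k\ge0}|e(k)|$ and $O_u=\sup_{k\ge0}|u(k)|$. *)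

(* Defs.v *)
From HB Require Import structures.
From mathcomp Require Import all_boot all_order all_algebra fraction.
From mathcomp Require Import all_classical all_reals all_analysis.
From mathcomp Require mpoly.

Set Implicit Arguments.
Unset Strict Implicit.
Unset Printing Implicit Defensive.

Import Order.TTheory GRing.Theory Num.Theory.
Local Open Scope ring_scope.

Definition simple_digraph (V E : finType) (src tgt : E -> V) : Prop :=
  injective (fun e => (src e, tgt e)).

Definition is_dpath (V E : finType) (src tgt : E -> V) (u v : V)
    (p : seq E) : bool :=
  if p is e :: p' then
    [&& src e == u, path (fun e1 e2 => tgt e1 == src e2) e p'
      & tgt (last e p') == v]
  else u == v.

Definition acyclic (V E : finType) (src tgt : E -> V) : Prop :=
  forall (x : V) (p : seq E), p != [::] -> ~~ is_dpath src tgt x x p.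

Fixpoint all_seqs (E : finType) (k : nat) : seq (seq E) :=
  if k is k'.+1 then [::] :: [seq e :: q | e <- enum E, q <- all_seqs E k']
  else [:: [::]].

(* the directed paths from u to v; in an acyclic graph every such path
   uses pairwise distinct edges, hence has length <= #|E|, so this list
   enumerates all of them. *)
Definition dpaths (V E : finType) (src tgt : E -> V) (u v : V) : seq (seq E) :=
  [seq p <- all_seqs E #|E| | is_dpath src tgt u v p].

Section Network.
Variables (R : numFieldType) (V E : finType) (src tgt : E -> V) (u v : V).
Variables (delay : seq E -> nat) (w : E -> R).

Definition path_weight (p : seq E) : R := \prod_(e <- p) w e.

Definition delays : seq nat := undup [seq delay p | p <- dpaths src tgt u v].

Definition max_delay : nat := \max_(d <- delays) d.

Definition gamma (d : nat) : R :=
  \sum_(p <- dpaths src tgt u v | delay p == d) path_weight p.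

Definition NG : {poly R} :=
  \sum_(d <- delays) gamma d *: 'X^(max_delay - d).
End Network.

Definition frac (R : idomainType) (p : R) : {fraction R} := FracField.tofrac p.

(* [ztrans_is y F] : the Z-transform  Y(z) = sum_{k>=0} y(k) z^(-k)  of
   y equals the rational function F = p/q, read as an identity of formal
   Laurent series in z^(-1):  q(z) * Y(z) = p(z), i.e. for every integer
   exponent t, the coefficient of z^t agrees on both sides. *)
Definition ztrans_is (R : fieldType) (y : nat -> R) (F : {fraction {poly R}}) :=
  exists p q : {poly R},
    [/\ q != 0, F = frac p / frac q,
       (forall t : nat, \sum_(t <= i < size q) q`_i * y (i - t)%N = p`_t)
     & (forall j : nat, \sum_(i < size q) q`_i * y (i + j.+1)%N = 0)].

Definition overshoot (R : realType) (x : nat -> R) : \bar R :=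
  ereal_sup (range (fun k => (`|x k|)%:E)).

Section Loop.
Variables (R : fieldType) (m s : nat).

Definition NC' (d : 'I_s.+1 -> R) : {poly R} := \sum_(i < s.+1) d i *: 'X^i.

Definition DC (c : 'I_m -> R) : {poly R} :=
  ('X - 1) * ('X^m + \sum_(i < m) c i *: 'X^i).

Variables (NP DP M NGR NGO : {poly R}) (DR DO : nat) (A : R).
Variables (c : 'I_m -> R) (d : 'I_s.+1 -> R).

Definition Cz : {fraction {poly R}} :=
  frac (M * 'X^DR * 'X^DO * NC' d) / frac (DC c).
Definition GRz : {fraction {poly R}} := frac NGR / frac 'X^DR.
Definition GOz : {fraction {poly R}} := frac NGO / frac 'X^DO.
Definition Pz : {fraction {poly R}} := frac NP / frac (M * DP).
Definition Rz : {fraction {poly R}} := frac (A *: 'X) / frac ('X - 1).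

Definition Yz : {fraction {poly R}} :=
  Cz * GRz * Pz / (1 + Cz * GRz * Pz * GOz) * Rz.
Definition Uz : {fraction {poly R}} :=
  Cz * GRz / (1 + Cz * GRz * Pz * GOz) * Rz.
End Loop.

Definition deadbeat (R : fieldType) (m s l : nat) (DP NP NGR NGO : {poly R})
    (c : 'I_m -> R) (d : 'I_s.+1 -> R) : Prop :=
  DC c * DP + NC' d * NGR * NP * NGO = 'X^l.

(* the variable vector (d, w_R) used to evaluate multivariate polynomials:
   variables 0..s are d_0..d_s, variables s+1.. are the edge weights of E_R
   (in the enumeration order of the finite type of edges) *)
Definition dw_vars (R : Type) (s : nat) (E : finType) (d : 'I_s.+1 -> R)
    (w : E -> R) : 'I_(s.+1 + #|E|) -> R :=
  fun i => match fintype.split i with inl j => d j | inr k => w (enum_val k) end.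

(* Main.v *)
Require Import Defs.
From HB Require Import structures.
From mathcomp Require Import all_boot all_order all_algebra fraction.
From mathcomp Require Import all_classical all_reals all_analysis.
From mathcomp Require mpoly.
From mathcomp Require Import zify ring lra.
Import Order.TTheory GRing.Theory Num.Theory.
Local Open Scope ring_scope.

Section Gen.
Variable R : fieldType.
Implicit Types (p q : {poly R}) (y : nat -> R).

Lemma sum_range_ext (f : nat -> R) a b N :
  (forall i, (b <= i)%N -> f i = 0) -> (b <= N)%N ->
  \sum_(a <= i < b) f i = \sum_(i < N) (if (a <= i)%N then f i else 0).
Proof.
move=> f0 bN; rewrite -(big_mkord xpredT (fun i => if (a <= i)%N then f i else 0)).
case: (leqP a b) => ab.
  rewrite [RHS](big_cat_nat (n:=a)) /= ?leq0n //; last exact: leq_trans ab bN.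
  rewrite [X in X + _]big1_seq ?add0r; last first.
    by move=> i /andP[_]; rewrite mem_index_iota => /andP[_ ia]; case: leqP ia => //; lia.
  rewrite [RHS](big_cat_nat (n:=b)) //= [X in _ + X]big1_seq ?addr0; last first.
    by move=> i /andP[_]; rewrite mem_index_iota => /andP[bi _]; rewrite (leq_trans ab bi) f0.
  by apply: eq_big_seq => i; rewrite mem_index_iota => /andP[-> _].
rewrite [LHS]big_geq ?(ltnW ab) //.
symmetry; apply: big1_seq => i _; case: (leqP a i) => // ai; apply: f0; lia.
Qed.


Definition Tpol y k : {poly R} := \poly_(j < k.+1) y (k - j)%N.

Lemma ztrans_rem y p q k : q != 0 ->
  (forall t : nat, \sum_(t <= i < size q) q`_i * y (i - t)%N = p`_t) ->
  (forall j : nat, \sum_(i < size q) q`_i * y (i + j.+1)%N = 0) ->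
  (size ('X^k * p - q * Tpol y k)%R < size q)%N.
Proof.
move=> q0 H1 H2.
have sq : (0 < size q)%N by rewrite size_poly_gt0.
suff : (size ('X^k * p - q * Tpol y k)%R <= (size q).-1)%N by case: (size q) sq.
apply/leq_sizeP => t tq.
have qz : forall i, (size q <= i)%N -> q`_i = 0 by move=> i; apply: nth_default.
rewrite coefB coefXnM coefM.
have tq' : (size q <= t.+1)%N by lia.
case: (ltnP t k) => tk.
  rewrite sub0r; apply/eqP; rewrite oppr_eq0; apply/eqP.
  have := H2 (k - t - 1)%N.
  rewrite -(big_mkord xpredT (fun i => q`_i * y (i + (k - t - 1).+1)%N)).
  rewrite (@sum_range_ext _ _ _ t.+1) //; last by move=> i /qz ->; rewrite mul0r.
  move=> e; rewrite -[RHS]e; apply: eq_bigr => j _; rewrite coef_poly.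
  have jt := ltn_ord j.
  have -> : (t - j < k.+1)%N by lia.
  by rewrite ?leq0n /=; congr (_ * y _); lia.
rewrite -(H1 (t - k)%N) (@sum_range_ext _ _ _ t.+1) //; last by move=> i /qz ->; rewrite mul0r.
rewrite -sumrB; apply: big1 => j _; rewrite coef_poly.
have jt := ltn_ord j.
case: (leqP (t - k) j) => h.
  have -> : (t - j < k.+1)%N by lia.
  by apply/eqP; rewrite subr_eq0; apply/eqP; congr (_ * y _); lia.
have -> : (t - j < k.+1)%N = false by lia.
by rewrite mulr0 subr0.
Qed.

Lemma ztrans_div_eq y p q k : q != 0 ->
  (forall t : nat, \sum_(t <= i < size q) q`_i * y (i - t)%N = p`_t) ->
  (forall j : nat, \sum_(i < size q) q`_i * y (i + j.+1)%N = 0) ->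
  y k = (('X^k * p) %/ q)`_0.
Proof.
move=> q0 H1 H2.
have -> : 'X^k * p = Tpol y k * q + ('X^k * p - q * Tpol y k) by rewrite [Tpol y k * q]mulrC addrC subrK.
by rewrite divp_addl_mul_small ?ztrans_rem // coef_poly /= subn0.
Qed.

Lemma divp_frac_eq (a b q Q : {poly R}) : q != 0 -> Q != 0 -> a * Q = b * q ->
  a %/ q = b %/ Q.
Proof.
move=> q0 Q0 e.
by rewrite -(divp_pmul2l a Q0 q0) [Q * a]mulrC e mulrC [Q * q]mulrC divp_pmul2l.
Qed.


Lemma ztrans_divP y F (P0 Q0 : {poly R}) : Q0 != 0 -> F = Defs.frac P0 / Defs.frac Q0 ->
  ztrans_is y F -> forall k, y k = (('X^k * P0) %/ Q0)`_0.
Proof.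
move=> Q0n0 -> [p [q [q0 e H1 H2]]] k.
rewrite (@ztrans_div_eq y p q k q0 H1 H2).
suff -> : (('X^k * p) %/ q = ('X^k * P0) %/ Q0) by [].
apply: divp_frac_eq => //.
have fq : Defs.frac q != 0 by rewrite /Defs.frac tofrac_eq0.
have fQ : Defs.frac Q0 != 0 by rewrite /Defs.frac tofrac_eq0.
have e2 : Defs.frac p * Defs.frac Q0 = Defs.frac P0 * Defs.frac q.
  rewrite -(divfK fq (Defs.frac p)) -(divfK fQ (Defs.frac P0)) -e.
  by rewrite mulrAC.
rewrite /Defs.frac -!tofracM in e2; move/eqP: e2; rewrite tofrac_eq => /eqP e2.
by rewrite -!mulrA e2.
Qed.

Lemma coef0_divXn l j :
  (('X^j : {poly R}) %/ ('X^l * ('X - 1)))`_0 = if (l < j)%N then 1 else 0.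
Proof.
have m1 : ('X - 1 : {poly R}) \is monic by rewrite -polyC1 monicXsubC.
have sQ : size ('X^l * ('X - 1) : {poly R}) = l.+2.
  rewrite size_Mmonic //; last by rewrite monic_neq0 // monicXn.
  by rewrite size_polyXn -polyC1 size_XsubC addn2.
case: (ltnP l j) => lj; last first.
  by rewrite divp_small ?coef0 // size_polyXn sQ; lia.
set S := \sum_(i < j - l) ('X : {poly R}) ^+ i.
have eX : ('X^j : {poly R}) = S * ('X^l * ('X - 1)) + 'X^l.
  rewrite mulrCA [S * _]mulrC -subrX1 mulrBr mulr1 -exprD subnKC ?subrK //; exact: ltnW.
rewrite eX divp_addl_mul_small; last by rewrite sQ size_polyXn.
rewrite /S coef_sum.
case e: (j - l)%N => [|n]; first lia.
rewrite big_ord_recl /= expr0 coefC /= big1 ?addr0 // => i _.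
by rewrite coefXn.
Qed.


Lemma Q0_neq0 l : ('X^l * ('X - 1) : {poly R}) != 0.
Proof.
by rewrite mulf_neq0 // ?monic_neq0 ?monicXn // -polyC1 monicXsubC.
Qed.

Lemma y_formula y B (a : nat -> R) l :
  ztrans_is y (Defs.frac (\poly_(i < B) a i) / Defs.frac ('X^l * ('X - 1))) ->
  forall k, y k = \sum_(i < B) a i * (if (l < k + i)%N then 1 else 0).
Proof.
move=> H k; rewrite (@ztrans_divP y _ _ _ (Q0_neq0 l) erefl H k).
rewrite poly_def mulr_sumr.
rewrite (big_morph (fun p => p %/ ('X^l * ('X - 1))) (fun p q => divpD _ p q) (div0p _)).
rewrite coef_sum; apply: eq_bigr => i _.
by rewrite -scalerAr -exprD divpZl coefZ coef0_divXn.
Qed.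

Lemma DC_neq0 m (c : 'I_m -> R) : DC c != 0.
Proof.
rewrite /DC mulf_neq0 //; first by rewrite monic_neq0 // -polyC1 monicXsubC.
rewrite -size_poly_eq0 size_addl ?size_polyXn //.
rewrite ?size_polyXn ltnS; apply/leq_sizeP => j jm; rewrite coef_sum big1 // => i _.
rewrite coefZ coefXn; case: eqP => [ji|]; last by rewrite mulr0.
by have := ltn_ord i; lia.
Qed.

Lemma X_neq0 k : ('X^k : {poly R}) != 0.
Proof. by rewrite monic_neq0 ?monicXn. Qed.

Lemma Xs1_neq0 : ('X - 1 : {poly R}) != 0.
Proof. by rewrite monic_neq0 // -polyC1 monicXsubC. Qed.

Lemma fieldY (F : fieldType) (m x xR xO dc dp n g np go xl x1 A : F) :
  m != 0 -> xR != 0 -> xO != 0 -> dc != 0 -> dp != 0 -> x1 != 0 -> xl != 0 ->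
  xl = dc*dp + n*g*np*go ->
  (m*xR*xO*n/dc) * (g/xR) * (np/(m*dp)) /
     (1 + (m*xR*xO*n/dc)*(g/xR)*(np/(m*dp))*(go/xO)) * (A*x/x1)
  = A*(xO*x)*n*g*np/(xl*x1).
Proof.
move=> h1 h2 h3 h4 h5 h6 h7 e.
have -> : 1 + (m*xR*xO*n/dc)*(g/xR)*(np/(m*dp))*(go/xO) = xl / (dc * dp).
  by rewrite e; field; rewrite ?h1 ?h2 ?h3 ?h4 ?h5.
by field; rewrite ?h1 ?h2 ?h3 ?h4 ?h5 ?h6 ?h7.
Qed.

Lemma fieldU (F : fieldType) (m x xR xO dc dp n g np go xl x1 A : F) :
  m != 0 -> xR != 0 -> xO != 0 -> dc != 0 -> dp != 0 -> x1 != 0 -> xl != 0 ->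
  xl = dc*dp + n*g*np*go ->
  (m*xR*xO*n/dc) * (g/xR) /
     (1 + (m*xR*xO*n/dc)*(g/xR)*(np/(m*dp))*(go/xO)) * (A*x/x1)
  = A * (xO*x) * m * n * g * dp / (xl*x1).
Proof.
move=> h1 h2 h3 h4 h5 h6 h7 e.
have -> : 1 + (m*xR*xO*n/dc)*(g/xR)*(np/(m*dp))*(go/xO) = xl / (dc * dp).
  by rewrite e; field; rewrite ?h1 ?h2 ?h3 ?h4 ?h5.
by field; rewrite ?h1 ?h2 ?h3 ?h4 ?h5 ?h6 ?h7.
Qed.

Lemma Yz_eq m s NP DP M NGR NGO DR DO A (c : 'I_m -> R) (d : 'I_s.+1 -> R) l :
  DP != 0 -> M != 0 -> deadbeat l DP NP NGR NGO c d ->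
  Yz NP DP M NGR NGO DR DO A c d =
  Defs.frac (A *: 'X^(DO.+1) * NC' d * NGR * NP) / Defs.frac ('X^l * ('X - 1)).
Proof.
move=> DP0 M0 db.
have dbF : tofrac ('X^l) = tofrac (DC c) * tofrac DP
    + tofrac (NC' d) * tofrac NGR * tofrac NP * tofrac NGO.
  by rewrite -db rmorphD !rmorphM.
rewrite /Yz /Cz /GRz /Pz /GOz /Rz /Defs.frac.
move: (@DC_neq0 m c) dbF; move: (DC c) => dc dc0 dbF.
rewrite -!mul_polyC exprSr !tofracM.
by apply: fieldY => //; rewrite ?tofrac_eq0 ?DP0 ?M0 ?dc0 ?X_neq0 ?Xs1_neq0.
Qed.

Lemma Uz_eq m s NP DP M NGR NGO DR DO A (c : 'I_m -> R) (d : 'I_s.+1 -> R) l :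
  DP != 0 -> M != 0 -> deadbeat l DP NP NGR NGO c d ->
  Uz NP DP M NGR NGO DR DO A c d =
  Defs.frac (A *: 'X^(DO.+1) * M * NC' d * NGR * DP) / Defs.frac ('X^l * ('X - 1)).
Proof.
move=> DP0 M0 db.
have dbF : tofrac ('X^l) = tofrac (DC c) * tofrac DP
    + tofrac (NC' d) * tofrac NGR * tofrac NP * tofrac NGO.
  by rewrite -db rmorphD !rmorphM.
rewrite /Uz /Cz /GRz /Pz /GOz /Rz /Defs.frac.
move: (@DC_neq0 m c) dbF; move: (DC c) => dc dc0 dbF.
rewrite -!mul_polyC exprSr !tofracM.
by apply: fieldU => //; rewrite ?tofrac_eq0 ?DP0 ?M0 ?dc0 ?X_neq0 ?Xs1_neq0.
Qed.

End Gen.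

Import (canonicals) mpoly.

Lemma overshoot_le (R : realType) (x : nat -> R) (Ob : R) :
  (overshoot x <= Ob%:E)%E <-> (forall k, `|x k| <= Ob).
Proof.
split.
  move=> h k; rewrite -lee_fin; apply: le_trans h.
  by apply: ereal_sup_ubound; exists k.
by move=> h; apply: ge_ereal_sup => _ [k _ <-]; rewrite lee_fin.
Qed.

Lemma overshoot_all (R : realType) (K : nat) (v : 'I_K -> R)
   (H : nat -> mpoly.mpoly K R) (x : nat -> R) (Ob : R) (L : nat) :
  (forall k, x k = mpoly.meval v (H k)) -> (forall k, (L <= k)%N -> x k = x L) ->
  (overshoot x <= Ob%:E)%E <->
  all (fun p => 0 <= mpoly.meval v p)
    ([seq mpoly.mpolyC K Ob - H k | k <- iota 0 L.+1] ++
     [seq mpoly.mpolyC K Ob + H k | k <- iota 0 L.+1]).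
Proof.
move=> xH xL; rewrite overshoot_le all_cat !all_map.
split.
  move=> h; apply/andP; split; apply/allP => k _ /=;
    rewrite ?mpoly.mevalB ?mpoly.mevalD mpoly.mevalC -xH;
    have := h k; rewrite ler_norml => /andP[h1 h2]; lra.
move=> /andP[/allP h1 /allP h2] k.
wlog kL : k / (k <= L)%N.
  move=> w; case: (leqP k L) => [|Lk]; first exact: w.
  by rewrite xL ?(ltnW Lk) //; apply: w.
have kin : k \in iota 0 L.+1 by rewrite mem_iota; lia.
have := h1 k kin; have := h2 k kin; rewrite /= mpoly.mevalB mpoly.mevalD mpoly.mevalC -xH.
by move=> a b; rewrite ler_norml; apply/andP; split; lra.
Qed.

Definition gammag {R : comNzRingType} {V E : finType} (src tgt : E -> V) (u v : V)
    (delay : seq E -> nat) (w : E -> R) (dd : nat) : R :=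
  \sum_(p <- dpaths src tgt u v | delay p == dd) \prod_(e <- p) w e.

Definition NGg {R : comNzRingType} {V E : finType} (src tgt : E -> V) (u v : V)
    (delay : seq E -> nat) (w : E -> R) : {poly R} :=
  \sum_(dd <- delays src tgt u v delay)
     gammag src tgt u v delay w dd *: 'X^(max_delay src tgt u v delay - dd).

Lemma NG_NGg (R : numFieldType) (V E : finType) (src tgt : E -> V) (u v : V)
    (delay : seq E -> nat) (w : E -> R) :
  NG src tgt u v delay w = NGg src tgt u v delay w.
Proof. reflexivity. Qed.

Lemma map_NGg (R S : comNzRingType) (f : {rmorphism R -> S}) (V E : finType)
    (src tgt : E -> V) (u v : V) (delay : seq E -> nat) (w : E -> R) :
  map_poly f (NGg src tgt u v delay w) = NGg src tgt u v delay (fun e => f (w e)).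
Proof.
rewrite /NGg rmorph_sum; apply: eq_bigr => dd _.
rewrite /= map_polyZ map_polyXn /gammag rmorph_sum; congr (_ *: _).
by apply: eq_bigr => p _; rewrite rmorph_prod.
Qed.

Lemma dw_vars_l (R : Type) s (E : finType) (d : 'I_s.+1 -> R) (w : E -> R) j :
  dw_vars d w (lshift #|E| j) = d j.
Proof. by rewrite /dw_vars (unsplitK (inl _ j)). Qed.

Lemma dw_vars_r (R : Type) s (E : finType) (d : 'I_s.+1 -> R) (w : E -> R) e :
  dw_vars d w (rshift s.+1 (enum_rank e)) = w e.
Proof. by rewrite /dw_vars (unsplitK (inr _ (enum_rank e))) enum_rankK. Qed.

Section Main.
Variables (R : realType) (K : nat) (l : nat).
Local Notation MP := (mpoly.mpoly K R).

Definition Gk (Zm : {poly MP}) (k : nat) : MP :=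
  \sum_(i < size Zm) (if (l < k + i)%N then Zm`_i else 0).

Lemma gen_formula (Zm : {poly MP}) (v : 'I_K -> R) (y : nat -> R) :
  ztrans_is y (Defs.frac (map_poly (mpoly.meval v) Zm) / Defs.frac ('X^l * ('X - 1))) ->
  forall k, y k = mpoly.meval v (Gk Zm k).
Proof.
move=> H k.
rewrite (@y_formula R y (size Zm) (fun i => mpoly.meval v Zm`_i) l H k).
rewrite /Gk rmorph_sum; apply: eq_bigr => i _.
by case: ifP => _; rewrite ?mulr1 ?mulr0 ?rmorph0.
Qed.

Lemma Gk_per (Zm : {poly MP}) k : (l.+1 <= k)%N -> Gk Zm k = Gk Zm l.+1.
Proof.
move=> lk; rewrite /Gk; apply: eq_bigr => i _.
have h1 : (l < k + i)%N by apply: leq_trans lk (leq_addr _ _).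
have h2 : (l < l.+1 + i)%N by apply: leq_trans (leqnn _) (leq_addr _ _).
by rewrite h1 h2.
Qed.

End Main.
Arguments Gk {R K} l Zm k.
Arguments gen_formula {R K l Zm v y}.
Arguments Gk_per {R K l} Zm k.

Theorem proposition3 (R : realType) (n r m s : nat)
    (NP DP M : {poly R})
    (VR ER : finType) (srcR tgtR : ER -> VR) (vc vu : VR) (dlyR : seq ER -> nat)
    (VO EO : finType) (srcO tgtO : EO -> VO) (vy vcO : VO) (dlyO : seq EO -> nat)
    (A Oy_bar Ou_bar : R) :
  (size NP <= n)%N -> DP \is monic -> size DP = r.+1 -> M \is monic ->
  (r + (size M).-1 = n)%N ->
  simple_digraph srcR tgtR -> acyclic srcR tgtR ->
  simple_digraph srcO tgtO -> acyclic srcO tgtO ->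
  (m.+1 = s + (size M).-1 + max_delay srcR tgtR vc vu dlyR
                          + max_delay srcO tgtO vy vcO dlyO)%N ->
  0 <= Oy_bar -> 0 <= Ou_bar ->
  let DR := max_delay srcR tgtR vc vu dlyR in
  let DO := max_delay srcO tgtO vy vcO dlyO in
  let l := (m + r + 1)%N in
  (exists ps : seq (mpoly.mpoly (s.+1 + #|ER|) R),
     forall (c : 'I_m -> R) (d : 'I_s.+1 -> R) (wR : ER -> R) (wO : EO -> R),
       let NGR := NG srcR tgtR vc vu dlyR wR in
       let NGO := NG srcO tgtO vy vcO dlyO wO in
       deadbeat l DP NP NGR NGO c d ->
       forall y : nat -> R, ztrans_is y (Yz NP DP M NGR NGO DR DO A c d) ->
       ((overshoot (fun k => (y k - A)%R) <= Oy_bar%:E)%E <->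
        (all (fun p => 0 <= mpoly.meval (dw_vars d wR) p) ps)))
  /\
  (exists ps : seq (mpoly.mpoly (s.+1 + #|ER|) R),
     forall (c : 'I_m -> R) (d : 'I_s.+1 -> R) (wR : ER -> R) (wO : EO -> R),
       let NGR := NG srcR tgtR vc vu dlyR wR in
       let NGO := NG srcO tgtO vy vcO dlyO wO in
       deadbeat l DP NP NGR NGO c d ->
       forall u : nat -> R, ztrans_is u (Uz NP DP M NGR NGO DR DO A c d) ->
       ((overshoot u <= Ou_bar%:E)%E <->
        (all (fun p => 0 <= mpoly.meval (dw_vars d wR) p) ps))).
Proof.
move=> hNP mDP sDP mM hn _ _ _ _ hm hOy hOu DR DO l.
have DP0 : DP != 0 by apply: monic_neq0.
have M0 : M != 0 by apply: monic_neq0.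
pose xv (i : 'I_(s.+1 + #|ER|)) : mpoly.mpoly (s.+1 + #|ER|) R := mpoly.mpolyX R (mpoly.mnm1 i).
pose NCm : {poly mpoly.mpoly (s.+1 + #|ER|) R} := \sum_(i < s.+1) xv (lshift #|ER| i) *: 'X^i.
pose wm := fun e : ER => xv (rshift s.+1 (enum_rank e)).
pose NGRm := NGg srcR tgtR vc vu dlyR wm.
pose lift := fun p : {poly R} => map_poly (@mpoly.mpolyC (s.+1 + #|ER|) R) p.
pose CA := mpoly.mpolyC (s.+1 + #|ER|) A.
pose Ym := CA *: 'X^(DO.+1) * NCm * NGRm * lift NP.
pose Um := CA *: 'X^(DO.+1) * lift M * NCm * NGRm * lift DP.
have mapNC : forall d wR, map_poly (mpoly.meval (dw_vars d wR)) NCm = NC' d.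
  move=> d wR; rewrite /NCm /NC' rmorph_sum; apply: eq_bigr => i _.
  rewrite /= map_polyZ map_polyXn; congr (_ *: _).
  by rewrite -(@dw_vars_l _ _ _ d wR i); exact: mpoly.mevalXU.
have mapNG : forall d wR, map_poly (mpoly.meval (dw_vars d wR)) NGRm =
    NG srcR tgtR vc vu dlyR wR.
  move=> d wR; rewrite /NGRm map_NGg NG_NGg; congr NGg; apply: funext => e.
  by rewrite -(@dw_vars_r _ _ _ d wR e); exact: mpoly.mevalXU.
have mapL : forall v p, map_poly (mpoly.meval v) (lift p) = p.
  move=> v p; apply/polyP => i; rewrite /lift !coef_map /=.
  by rewrite mpoly.mevalC.
have mapCA : forall v, map_poly (mpoly.meval v) (CA *: 'X^(DO.+1)) = A *: 'X^(DO.+1).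
  move=> v; rewrite /= map_polyZ map_polyXn; congr (_ *: _).
  by rewrite /CA; exact: mpoly.mevalC.
split.
  exists ([seq mpoly.mpolyC _ Oy_bar - (Gk l Ym k - CA) | k <- iota 0 l.+2] ++
          [seq mpoly.mpolyC _ Oy_bar + (Gk l Ym k - CA) | k <- iota 0 l.+2]).
  move=> c d wR wO NGR NGO db y hy.
  have eY : Yz NP DP M NGR NGO DR DO A c d =
      Defs.frac (map_poly (mpoly.meval (dw_vars d wR)) Ym) / Defs.frac ('X^l * ('X - 1)).
    by rewrite (@Yz_eq _ _ _ _ _ _ _ _ _ _ _ _ _ _ DP0 M0 db) -(mapCA (dw_vars d wR)) -(mapNC d wR) /NGR -(mapNG d wR) -(mapL (dw_vars d wR) NP) /Ym !rmorphM.
  rewrite eY in hy.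
  apply: overshoot_all => k.
    by rewrite (gen_formula hy) mpoly.mevalB /CA mpoly.mevalC.
  by move=> lk; rewrite !(gen_formula hy) (Gk_per _ _ lk).
exists ([seq mpoly.mpolyC _ Ou_bar - Gk l Um k | k <- iota 0 l.+2] ++
        [seq mpoly.mpolyC _ Ou_bar + Gk l Um k | k <- iota 0 l.+2]).
move=> c d wR wO NGR NGO db u hu.
have eU : Uz NP DP M NGR NGO DR DO A c d =
    Defs.frac (map_poly (mpoly.meval (dw_vars d wR)) Um) / Defs.frac ('X^l * ('X - 1)).
  by rewrite (@Uz_eq _ _ _ _ _ _ _ _ _ _ _ _ _ _ DP0 M0 db) -(mapCA (dw_vars d wR)) -(mapNC d wR) /NGR -(mapNG d wR) -(mapL (dw_vars d wR) M) -(mapL (dw_vars d wR) DP) /Um !rmorphM.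
rewrite eU in hu.
apply: overshoot_all => k.
  by rewrite (gen_formula hu).
by move=> lk; rewrite !(gen_formula hu) (Gk_per _ _ lk).
Qed.
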